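(* Let $\Box$ be an axis-parallel square of side length $1/2$, $l$ the line containing its top edge, $H$ the open halfplane above $l$, and $u_1,\dots,u_N$ points in $\Box$. Define subdivisions $\varPhi_0,\dots,\varPhi_N$ of $H$: $\varPhi_0$ has the single face $F_0=H$ (its outer face); given $\varPhi_{i-1}$ with outer face $F_{i-1}=H\setminus\bigcup_{j<i}\odot_{u_j}$, obtain $\varPhi_i$ by splitting $F_{i-1}$ into the face $F_i=F_{i-1}\setminus\odot_{u_i}$ (the new outer face) and the connected components of $F_{i-1}\cap\odot_{u_i}$, each of which is labeled $i$; all other faces are kept. Let $\varPhi=\varPhi_N$. Then $\varPhi$ has complexity $O(N)$, and for each $i\in\{1,\dots,N\}$, $\varPhi$ has at most one face labeled $i$.
   Context: $\odot_a$ denotes the closed disk of radius 1 centered at $a$ (Euclidean norm). *)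

(* Defs.v *)
(* The plane is R * R with the product topology
   (= Euclidean topology); disks use the Euclidean norm explicitly. *)
From HB Require Import structures.
From mathcomp Require Import all_boot all_order all_algebra.
From mathcomp Require Import all_classical all_reals all_analysis.
Set Implicit Arguments. Unset Strict Implicit. Unset Printing Implicit Defensive.
Import Order.TTheory GRing.Theory Num.Theory.
Import numFieldNormedType.Exports.
Local Open Scope classical_set_scope.
Local Open Scope ring_scope.

Section Defs.
Variable R : realType.
Notation P := (R * R)%type.

Definition disk (a : P) : set P :=
  [set p | (p.1 - a.1) ^+ 2 + (p.2 - a.2) ^+ 2 <= 1].

Definition box (a b : R) : set P :=
  [set p | a <= p.1 <= a + 2^-1 /\ b <= p.2 <= b + 2^-1].

Definition halfH (b : R) : set P := [set p | b + 2^-1 < p.2].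

Definition outer_face (b : R) (u : nat -> P) (i : nat) : set P :=
  halfH b `\` \bigcup_(j in [set j : nat | (1 <= j <= i)%N]) disk (u j).

Definition labeled_face (b : R) (u : nat -> P) (i : nat) (C : set P) : Prop :=
  exists x, (outer_face b u i.-1 `&` disk (u i)) x /\
            C = connected_component (outer_face b u i.-1 `&` disk (u i)) x.

Definition faces (b : R) (u : nat -> P) (N : nat) : set (set P) :=
  [set C | C = outer_face b u N \/
           exists i, (1 <= i <= N)%N /\ labeled_face b u i C].

Definition regions (b : R) (u : nat -> P) (N : nat) : set (set P) :=
  faces b u N `|` [set ~` halfH b].

Definition bd (A : set P) : set P := closure A `\` interior A.

Definition skeleton (b : R) (u : nat -> P) (N : nat) : set P :=
  \bigcup_(A in regions b u N) bd A.

Definition vertices (b : R) (u : nat -> P) (N : nat) : set P :=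
  [set p | exists A1 A2 A3, [/\ regions b u N A1, regions b u N A2 &
      regions b u N A3] /\ [/\ A1 <> A2, A1 <> A3 & A2 <> A3] /\
      [/\ bd A1 p, bd A2 p & bd A3 p]].

Definition edges (b : R) (u : nat -> P) (N : nat) : set (set P) :=
  [set E | exists x, (skeleton b u N `\` vertices b u N) x /\
     E = connected_component (skeleton b u N `\` vertices b u N) x].

End Defs.

Definition atmost (T : Type) (A : set T) (n : nat) : Prop :=
  exists f : nat -> T, A `<=` f @` [set k : nat | (k < n)%N].

Definition complexity_le (R : realType) (b : R) (u : nat -> R * R) (N n : nat) : Prop :=
  exists nf nv ne : nat, (nf + nv + ne <= n)%N /\
    atmost (faces b u N) nf /\ atmost (vertices b u N) nv /\
    atmost (edges b u N) ne.

(* Main.v *)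
Require Import Defs.
From HB Require Import structures.
From mathcomp Require Import all_boot all_order all_algebra.
From mathcomp Require Import all_classical all_reals all_analysis.
From mathcomp Require Import ring lra.
From Stdlib Require Import Lia.
From mathcomp Require Import zify.
Set Implicit Arguments. Unset Strict Implicit. Unset Printing Implicit Defensive.
Import Order.TTheory GRing.Theory Num.Theory.
Import numFieldNormedType.Exports.
Local Open Scope classical_set_scope.
Local Open Scope ring_scope.
Definition pick (T : Type) (d : T) (P : T -> Prop) : T :=
  match pselect (exists x, P x) with left h => proj1_sig (cid h) | right _ => d end.

Lemma pickP (T : Type) (d : T) (P : T -> Prop) : (exists x, P x) -> P (pick d P).
Proof.
move=> h; rewrite /pick; case: pselect => [h'|//].
exact: (proj2_sig (cid h')).
Qed.

Lemma mid3 (P : nat -> Prop) k1 k2 k3 : P k1 -> P k2 -> P k3 ->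
  k1 <> k2 -> k1 <> k3 -> k2 <> k3 ->
  exists lo m hi, [/\ (lo < m)%N, (m < hi)%N, P lo, P m & P hi].
Proof.
move=> p1 p2 p3 n12 n13 n23.
have [a|a] : (k1 < k2 \/ k2 < k1)%N by lia.
all: have [b|b] : (k2 < k3 \/ k3 < k2)%N by lia.
all: have [c|c] : (k1 < k3 \/ k3 < k1)%N by lia.
all: first [by exists k1, k2, k3 | by exists k1, k3, k2 | by exists k2, k1, k3
  | by exists k2, k3, k1 | by exists k3, k1, k2 | by exists k3, k2, k1
  | (exfalso; lia)].
Qed.

Section Geo.
Variable R : realType.
Implicit Types (x y s t h : R).

Lemma sqrt_ge0' (q : R) : 0 <= Num.sqrt q. Proof. exact: sqrtr_ge0. Qed.

Lemma sqrt_sq (q : R) : 0 <= q -> Num.sqrt q * Num.sqrt q = q.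
Proof. by move=> h; rewrite -expr2 sqr_sqrtr. Qed.

Lemma sqrt_lt_iff (q d : R) : 0 < d -> (Num.sqrt q < d <-> q < d * d).
Proof.
move=> d0; have g := sqrt_ge0' q.
have [q0|q0] := leP 0 q.
  have e := sqrt_sq q0; split => h; nra.
rewrite ltr0_sqrtr //; split => _; nra.
Qed.

Lemma sqrt_gt_iff (q c : R) : 0 <= c -> (c < Num.sqrt q <-> c * c < q).
Proof.
move=> c0; have g := sqrt_ge0' q.
have [q0|q0] := leP 0 q.
  have e := sqrt_sq q0; split => h; nra.
rewrite ltr0_sqrtr //; split => h; nra.
Qed.

End Geo.
Section Geo2.
Variable R : realType.

Definition tt_ (s : R) := Num.sqrt (1 - s * s).

Lemma tt_cont : continuous tt_.
Proof.
move=> x; apply: (@continuous_comp _ _ _ (fun s : R => 1 - s * s) Num.sqrt).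
  by apply: cvgB; [exact: cvg_cst| apply: cvgM; exact: cvg_id].
exact: sqrt_continuous.
Qed.

Definition phi_ (w1 w2 : R) (s : R) := 2 * (s * w1 + tt_ s * w2) - (w1 * w1 + w2 * w2).

Lemma phi_cont w1 w2 : continuous (phi_ w1 w2).
Proof.
move=> x; apply: cvgB; last exact: cvg_cst.
apply: cvgM; first exact: cvg_cst.
apply: cvgD; apply: cvgM; try exact: cvg_cst; try exact: cvg_id.
exact: tt_cont.
Qed.

Lemma ivt0 (f : R -> R) a c : continuous f -> a <= c -> f a <= 0 <= f c \/ f c <= 0 <= f a ->
  exists2 r, a <= r <= c & f r = 0.
Proof.
move=> fc ac H.
have [r ri fr] := @IVT R f a c 0 ac (continuous_subspaceT fc) ltac:(case: H => /andP[h1 h2];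
  apply/andP; split; [rewrite ge_min h1 ?orbT //| rewrite le_max h2 ?orbT //| rewrite ge_min h1 ?orbT// | rewrite le_max h2 ?orbT //]).
by exists r => //; move: ri; rewrite in_itv.
Qed.

End Geo2.
Section Core.
Variable R : realType.

Lemma tt_sq (s : R) : s * s <= 1 -> tt_ s * tt_ s = 1 - s * s.
Proof. by move=> h; rewrite sqrt_sq // subr_ge0. Qed.

Lemma tt_ge0 (s : R) : 0 <= tt_ s. Proof. exact: sqrt_ge0'. Qed.

Lemma tt_concave (a b c : R) : a < b < c -> a * a <= 1 -> c * c <= 1 ->
  tt_ a * (c - b) + tt_ c * (b - a) <= tt_ b * (c - a).
Proof.
move=> /andP[ab bc] a1 c1.
have b1 : b * b <= 1 by have [b0|b0] := leP 0 b; nra.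
have ea := tt_sq a1; have eb := tt_sq b1; have ec := tt_sq c1.
have ga := tt_ge0 a; have gb := tt_ge0 b; have gc := tt_ge0 c.
have hac : tt_ a * tt_ c <= 1 - a * c.
  have h1 : 0 <= 1 - a * c by nra.
  have h2 : (tt_ a * tt_ c) * (tt_ a * tt_ c) <= (1 - a * c) * (1 - a * c).
    have -> : (tt_ a * tt_ c) * (tt_ a * tt_ c) = (tt_ a * tt_ a) * (tt_ c * tt_ c) by ring.
    rewrite ea ec; nra.
  nra.
set L := tt_ b * (c - a); set Rr := tt_ a * (c - b) + tt_ c * (b - a).
have L0 : 0 <= L by rewrite /L; nra.
have R0 : 0 <= Rr by rewrite /Rr; nra.
have sq : Rr * Rr <= L * L.
  have -> : L * L = (tt_ b * tt_ b) * ((c - a) * (c - a)) by rewrite /L; ring.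
  have -> : Rr * Rr = (tt_ a * tt_ a) * ((c - b) * (c - b)) + (tt_ c * tt_ c) * ((b - a) * (b - a))
      + 2 * (tt_ a * tt_ c) * ((c - b) * (b - a)) by rewrite /Rr; ring.
  rewrite ea eb ec.
  have p : 0 <= (c - b) * (b - a) by nra.
  nra.
nra.
Qed.

Lemma sqrt_sqr_pos (q : R) : 0 <= q -> Num.sqrt (q * q) = q.
Proof. by move=> q0; rewrite -expr2 sqrtr_sqr ger0_norm. Qed.

Lemma core_shift (w1 w2 h s1 s2 s3 : R) :
  0 <= h -> w2 <= h -> w1 * w1 + w2 * w2 < 4 ->
  s1 < s2 -> s2 < s3 ->
  h < tt_ s1 -> h < tt_ s2 -> h < tt_ s3 ->
  phi_ w1 w2 s1 < 0 -> phi_ w1 w2 s3 < 0 -> phi_ w1 w2 s2 < 0.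
Proof.
move=> h0 w2h w4 s12 s23 t1 t2 t3 p1 p3.
have k1 : s1 * s1 < 1.
  by move: t1; rewrite /tt_ sqrt_gt_iff //; nra.
have k2 : s2 * s2 < 1 by move: t2; rewrite /tt_ sqrt_gt_iff //; nra.
have k3 : s3 * s3 < 1 by move: t3; rewrite /tt_ sqrt_gt_iff //; nra.
have e1 := tt_sq (ltW k1); have e2 := tt_sq (ltW k2); have e3 := tt_sq (ltW k3).
rewrite ltNge; apply/negP => p2.
have [w2n|w2p] := leP w2 0.
  move: p1 p2 p3; rewrite /phi_ => p1 p2 p3.
  have [w1p|w1n] := ltP 0 w1.
    have s2p : 0 <= s2 by have [z|z] := leP 0 s2; nra.
    have : tt_ s3 <= tt_ s2.
      have : tt_ s3 * tt_ s3 <= tt_ s2 * tt_ s2 by rewrite e2 e3; nra.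
      nra.
    nra.
  have [w1n'|w10] := ltP w1 0.
    have s2n : s2 <= 0 by have [z|z] := leP s2 0; nra.
    have : tt_ s1 <= tt_ s2.
      have : tt_ s1 * tt_ s1 <= tt_ s2 * tt_ s2 by rewrite e1 e2; nra.
      nra.
    nra.
  have w10' : w1 = 0 by apply/eqP; rewrite eq_le w10 w1n.
  subst w1.
  have : w2 = 0 by nra.
  move=> w20; subst w2; nra.
pose n := Num.sqrt (w1 * w1 + w2 * w2).
have n0 : 0 < n by rewrite /n sqrtr_gt0; nra.
have nn : n * n = w1 * w1 + w2 * w2 by rewrite /n sqrt_sq //; nra.
have n2 : n < 2 by nra.
pose sg := w1 / n.
have sgn : sg * n = w1 by rewrite /sg mulrVK // unitfE gt_eqF.
have sg1 : sg * sg <= 1.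
  have : (sg * sg) * (n * n) <= 1 * (n * n).
    have -> : (sg * sg) * (n * n) = (sg * n) * (sg * n) by ring.
    rewrite sgn; nra.
  move=> H; nra.
have tsg : tt_ sg = w2 / n.
  have hpos : 0 <= w2 / n by apply: divr_ge0; nra.
  rewrite /tt_ -(sqrt_sqr_pos hpos); congr Num.sqrt.
  have : (w2 / n) * n = w2 by rewrite mulrVK // unitfE gt_eqF.
  move=> H.
  apply: (@mulIf _ (n * n)); first by rewrite mulf_neq0 // gt_eqF.
  have -> : (1 - sg * sg) * (n * n) = n * n - (sg * n) * (sg * n) by ring.
  have -> : (w2 / n * (w2 / n)) * (n * n) = ((w2 / n) * n) * ((w2 / n) * n) by ring.
  rewrite sgn H nn; ring.
have psg : 0 < phi_ w1 w2 sg.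
  rewrite /phi_ tsg.
  have : (2 * (sg * w1 + w2 / n * w2) - (w1 * w1 + w2 * w2)) * n = 2 * (n * n) - (n * n) * n.
    have H : (w2 / n) * n = w2 by rewrite mulrVK // unitfE gt_eqF.
    have -> : (2 * (sg * w1 + w2 / n * w2) - (w1 * w1 + w2 * w2)) * n
       = 2 * ((sg * n) * w1 + ((w2 / n) * n) * w2) - (w1 * w1 + w2 * w2) * n by ring.
    rewrite sgn H nn; ring.
  move: (2 * _ - _) => X H.
  have P : 0 < 2 * (n * n) - n * n * n.
    have -> : 2 * (n * n) - n * n * n = (n * n) * (2 - n) by ring.
    by apply: mulr_gt0; nra.
  rewrite -H in P; nra.
have conc : forall a b c, a < b < c -> a * a <= 1 -> c * c <= 1 ->
   phi_ w1 w2 a * (c - b) + phi_ w1 w2 c * (b - a) <= phi_ w1 w2 b * (c - a).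
  move=> a b c abc a1 c1; have := tt_concave abc a1 c1; rewrite /phi_.
  case/andP: abc => ab bc; nra.
have sg_gt : s1 < sg.
  rewrite ltNge; apply/negP; rewrite le_eqVlt => /orP[/eqP E|lt].
    by move: psg; rewrite E => psg; move: p1; rewrite ltNge (ltW psg).
  have := conc sg s1 s2 (introT andP (conj lt s12)) sg1 (ltW k2).
  nra.
have sg_lt : sg < s3.
  rewrite ltNge; apply/negP; rewrite le_eqVlt => /orP[/eqP E|lt].
    by move: psg; rewrite -E => psg; move: p3; rewrite ltNge (ltW psg).
  have := conc s2 s3 sg (introT andP (conj s23 lt)) (ltW k2) sg1.
  nra.
have [r1 /andP[r1a r1b] f1] := ivt0 (@phi_cont _ w1 w2) (ltW sg_gt) (or_introl (introT andP (conj (ltW p1) (ltW psg)))).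
have [r2 /andP[r2a r2b] f2] := ivt0 (@phi_cont _ w1 w2) (ltW sg_lt) (or_intror (introT andP (conj (ltW p3) (ltW psg)))).
have r1n : r1 != sg by apply/eqP => E; move: f1; rewrite E => E'; move: psg; rewrite E'; rewrite ltxx.
have r2n : r2 != sg by apply/eqP => E; move: f2; rewrite E => E'; move: psg; rewrite E'; rewrite ltxx.
have r12 : r1 < r2.
  apply: (@lt_le_trans _ _ sg); last by [].
  by rewrite lt_neqAle r1n r1b.
have th : forall r, s1 <= r -> r <= s3 -> h < tt_ r.
  move=> r a c; rewrite /tt_ sqrt_gt_iff //.
  move: t1 t3; rewrite /tt_ !sqrt_gt_iff // => q1 q3.
  have [r0|r0] := leP 0 r; nra.
have hr1 := th r1 r1a (le_trans r1b (ltW sg_lt)).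
have hr2 := th r2 (le_trans (ltW sg_gt) r2a) r2b.
have q1 : r1 * r1 < 1 by move: hr1; rewrite /tt_ sqrt_gt_iff //; nra.
have q2 : r2 * r2 < 1 by move: hr2; rewrite /tt_ sqrt_gt_iff //; nra.
have er1 := tt_sq (ltW q1); have er2 := tt_sq (ltW q2).
move: f1 f2; rewrite /phi_ => f1 f2.
set T1 := tt_ r1 in hr1 er1 f1; set T2 := tt_ r2 in hr2 er2 f2.
set d := r1 - r2; set e := T1 - T2.
have dw : d * w1 = - (e * w2) by rewrite /d /e; nra.
have dS : d * (r1 + r2) = - (e * (T1 + T2)) by rewrite /d /e; nra.
have sum : (r1 + r2) * w1 + (T1 + T2) * w2 = w1 * w1 + w2 * w2 by nra.
have key : w2 * (e * e + d * d) * ((T1 + T2) - w2) = 0.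
  have E1 : (d * (r1 + r2)) * (d * w1) + (T1 + T2) * w2 * (d * d) = (d * d) * (w1 * w1 + w2 * w2).
    rewrite -sum; ring.
  rewrite dS dw in E1.
  have E2 : (d * w1) * (d * w1) = (e * w2) * (e * w2) by rewrite dw; ring.
  have : (d * d) * (w1 * w1) = (e * e) * (w2 * w2) by rewrite -[LHS]/((d*d)*(w1*w1)); nra.
  move=> E3; nra.
have dne : d != 0 by rewrite /d subr_eq0 lt_eqF.
have : (T1 + T2) - w2 = 0.
  have dd : 0 < d * d by rewrite -expr2 exprn_even_gt0.
  have pos : 0 < w2 * (e * e + d * d) by apply: mulr_gt0 => //; nra.
  by move/eqP: key; rewrite mulf_eq0 (gt_eqF pos) /= => /eqP.
nra.
Qed.

End Core.
Section Env.
Variable R : realType.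
Variables (a b : R) (N : nat) (u : nat -> R * R).
Hypothesis hbox : forall i, (1 <= i <= N)%N -> box a b (u i).

Definition ll := b + 2^-1.
Definition top j (x : R) := (u j).2 + tt_ (x - (u j).1).
Fixpoint env (k : nat) (x : R) : R :=
  if k is k'.+1 then Num.max (env k' x) (top k'.+1 x) else ll.

Lemma envS k x : env k.+1 x = Num.max (env k x) (top k.+1 x).
Proof. by []. Qed.

Lemma env_ge_l k x : ll <= env k x.
Proof. by elim: k => [|k IH] //=; rewrite le_max IH. Qed.

Lemma env_mono k k' x : (k <= k')%N -> env k x <= env k' x.
Proof.
move=> kk; elim: k' kk => [|k' IH]; first by rewrite leqn0 => /eqP->.
rewrite leq_eqVlt => /orP[/eqP->//|]; rewrite ltnS => /IH h.
by rewrite envS le_max h.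
Qed.

Lemma env_lt k x v : env k x < v <-> ll < v /\ forall j, (1 <= j <= k)%N -> top j x < v.
Proof.
elim: k => [|k IH] /=.
  by split=> [h|[]//]; split=> // j /andP[h1 h2]; move: (leq_trans h1 h2).
rewrite gt_max; split.
  move=> /andP[/IH[h1 h2] h3]; split=> // j /andP[j1]; rewrite leq_eqVlt => /orP[/eqP->//|].
  by rewrite ltnS => jk; apply: h2; rewrite j1.
move=> [h1 h2]; apply/andP; split; last by apply: h2; rewrite leqnn.
by apply/IH; split=> // j /andP[j1 jk]; apply: h2; rewrite j1 (leq_trans jk).
Qed.

Lemma box_y j : (1 <= j <= N)%N -> (u j).2 <= ll.
Proof. by move=> /hbox [_ /andP[_ h]]. Qed.

Lemma disk_top j (p : R * R) : (1 <= j <= N)%N -> ll < p.2 ->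
  (~ disk (u j) p <-> top j p.1 < p.2).
Proof.
move=> jN lp; have := box_y jN => hy.
rewrite /top /disk /=.
have d0 : 0 < p.2 - (u j).2 by rewrite subr_gt0 (le_lt_trans hy lp).
have -> : (u j).2 + tt_ (p.1 - (u j).1) < p.2 <-> tt_ (p.1 - (u j).1) < p.2 - (u j).2.
  by rewrite ltrBrDl.
rewrite /tt_ sqrt_lt_iff //; rewrite !expr2.
by split => h; [rewrite ltNge; apply/negP => H; apply: h; nra| move=> H; nra].
Qed.

Lemma outer_env k (p : R * R) : (k <= N)%N -> outer_face b u k p <-> env k p.1 < p.2.
Proof.
move=> kN; rewrite /outer_face env_lt /halfH /=; split.
  move=> [lp nd]; split=> // j jk.
  have jN : (1 <= j <= N)%N by case/andP: jk => j1 jk; rewrite j1 (leq_trans jk).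
  apply/(disk_top jN) => // dj; apply: nd; exists j => //.
move=> [lp h]; split=> // -[j jk dj].
have jN : (1 <= j <= N)%N by case/andP: jk => j1 jk; rewrite j1 (leq_trans jk).
by move: (h j jk); apply/(disk_top jN).
Qed.

Lemma S_env i (p : R * R) : (1 <= i <= N)%N ->
  (outer_face b u i.-1 `&` disk (u i)) p <-> env i.-1 p.1 < p.2 <= env i p.1.
Proof.
case: i => [//|i] iN /=.
have iN' : (i <= N)%N by case/andP: iN => _ /ltnW.
rewrite outer_env //; split.
  move=> [h dk]; rewrite h /= le_max; apply/orP; right.
  rewrite leNgt; apply/negP => H; apply/(disk_top iN): dk => //.
  exact: le_lt_trans (env_ge_l _ _) h.
move=> /andP[h1 h2]; split=> //.
have lp : ll < p.2 by exact: le_lt_trans (env_ge_l _ _) h1.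
move: h2; rewrite le_max (leNgt p.2 (env i p.1)) h1 /= => h2.
have := (disk_top iN lp).1 => H.
apply: contraT => nd; have := H (negP nd).
by rewrite ltNge h2.
Qed.


Lemma top_phi i j x : (1 <= i <= N)%N -> (1 <= j <= N)%N -> ll < top i x ->
  (top j x < top i x <->
   phi_ ((u j).1 - (u i).1) ((u j).2 - (u i).2) (x - (u i).1) < 0).
Proof.
move=> iN jN lt; have hi := box_y iN; have hj := box_y jN.
move: lt; rewrite /top /phi_.
have -> : x - (u j).1 = (x - (u i).1) - ((u j).1 - (u i).1) by ring.
move: (x - (u i).1) ((u j).1 - (u i).1) => s w1.
set w2 := (u j).2 - (u i).2.
move=> lt.
have ts : ll - (u i).2 < tt_ s by rewrite ltrBlDl.
have s1 : s * s <= 1.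
  by move: ts; rewrite /tt_ sqrt_gt_iff ?subr_ge0 //; nra.
have e := tt_sq s1; have g := tt_ge0 s.
have pos : 0 < tt_ s - w2 by rewrite /w2; lra.
have -> : ((u j).2 + tt_ (s - w1) < (u i).2 + tt_ s) <-> tt_ (s - w1) < tt_ s - w2.
  by rewrite /w2; split => h; lra.
rewrite {1}/tt_ sqrt_lt_iff //.
split => h; nra.
Qed.

Lemma Xs_mem i x : env i x < env i.+1 x <->
  ll < top i.+1 x /\ forall j, (1 <= j <= i)%N -> top j x < top i.+1 x.
Proof. by rewrite envS lt_max ltxx /= env_lt. Qed.

Lemma Xs_interval i : (1 <= i <= N)%N -> is_interval [set x | env i.-1 x < env i x].
Proof.
case: i => [//|i] iN /=; apply/is_intervalPlt => x1 x3 /= /Xs_mem[l1 h1] /Xs_mem[l3 h3] x2 /andP[x12 x23].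
have hi := box_y iN.
have [_ /andP[bi1 bi2]] := hbox iN.
have [/andP[ai1 ai2] _] := hbox iN.
have lt2 : ll < top i.+1 x2.
  move: l1 l3; rewrite /top => l1 l3.
  have t1 : ll - (u i.+1).2 < tt_ (x1 - (u i.+1).1) by lra.
  have t3 : ll - (u i.+1).2 < tt_ (x3 - (u i.+1).1) by lra.
  suff : ll - (u i.+1).2 < tt_ (x2 - (u i.+1).1) by lra.
  move: t1 t3; rewrite /tt_ !sqrt_gt_iff ?subr_ge0 // => t1 t3.
  have [z|z] := leP 0 (x2 - (u i.+1).1); nra.
apply/Xs_mem; split => // j jI.
have jN : (1 <= j <= N)%N by case/andP: jI => j1 ji; rewrite j1 (leq_trans ji) // ltnW //; case/andP: iN.
have hj := box_y jN.
have [_ /andP[bj1 bj2]] := hbox jN.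
have [/andP[aj1 aj2] _] := hbox jN.
apply/(top_phi iN jN lt2).
move: (h1 j jI) (h3 j jI); rewrite (top_phi iN jN l1) (top_phi iN jN l3) => p1 p3.
move: l1 l3 lt2; rewrite /top => l1 l3 lt2.
apply: (core_shift (h := ll - (u i.+1).2) (s1 := x1 - (u i.+1).1) (s3 := x3 - (u i.+1).1)) => //; try lra.
rewrite /ll in hi hj l1 l3 lt2 *; nra.
Qed.

Lemma top_cont j : continuous (top j).
Proof.
move=> x; apply: cvgD; first exact: cvg_cst.
have h1 : {for x, continuous (fun x : R => x - (u j).1)}.
  by apply: cvgB; [exact: cvg_id|exact: cvg_cst].
exact: (@continuous_comp _ _ _ (fun x : R => x - (u j).1) (@tt_ R) x h1 (@tt_cont _ _)).
Qed.

Lemma env_cont k : continuous (env k).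
Proof.
elim: k => [|k IH]; first by move=> x; exact: cvg_cst.
exact: (max_fun_continuous IH (@top_cont k.+1)).
Qed.

Definition Sset i := [set p : R * R | env i.-1 p.1 < p.2 <= env i p.1].
Definition Xset i := [set x : R | env i.-1 x < env i x].

Lemma pair_cont_l (f : R -> R) : continuous f -> continuous (fun x => (x, f x)).
Proof.
move=> fc x.
have := @cvg_pair R R R (nbhs x) (nbhs x) (nbhs (f x)) _ _ _ id f cvg_id (fc x).
exact.
Qed.

Lemma pair_cont_r (x : R) : continuous (fun y : R => (x, y)).
Proof.
move=> y.
have := @cvg_pair R R R (nbhs y) (nbhs x) (nbhs y) _ _ _ (fun=> x) id (cvg_cst _) cvg_id.
exact.
Qed.

Lemma S_connected i : (1 <= i <= N)%N -> connected (Sset i).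
Proof.
move=> iN.
pose G := (fun x => (x, env i x)) @` Xset i.
pose V x := (fun y => (x, y)) @` [set y | env i.-1 x < y <= env i x].
have GC : connected G.
  apply: connected_continuous_connected; first exact/connected_intervalP/Xs_interval.
  exact/continuous_subspaceT/pair_cont_l/env_cont.
have VC x : connected (V x).
  apply: connected_continuous_connected; last exact/continuous_subspaceT/pair_cont_r.
  apply/connected_intervalP => y1 y2 /andP[a1 b1] /andP[a2 b2] z /andP[z1 z2].
  by apply/andP; split; [exact: lt_le_trans z1|exact: le_trans b2].
have -> : Sset i = \bigcup_(x in Xset i) (G `|` V x).
  apply/seteqP; split.
    move=> [x y] /= /andP[h1 h2]; exists x; first exact: lt_le_trans h2.
    by right; exists y => //; apply/andP.
  move=> p [x Xx [[x' Xx' <-]|[y /andP[h1 h2] <-]]]; rewrite /Sset /=; first by rewrite Xx' lexx.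
  by rewrite h1 h2.
have [[x0 Xx0]|nX] := pselect (exists x, Xset i x).
  apply: bigcup_connected.
    by exists (x0, env i x0) => x Xx; left; exists x0.
  move=> x Xx; apply: connectedU => //.
  by exists (x, env i x); split; [exists x|exists (env i x) => //; rewrite /= Xx lexx].
apply: bigcup_connected; last first.
  move=> x Xx; exfalso; apply: nX; by exists x.
by exists (0, 0) => x Xx; exfalso; apply: nX; exists x.
Qed.

Lemma labeled_S i C : (1 <= i <= N)%N -> labeled_face b u i C -> C = Sset i.
Proof.
move=> iN [x [Sx ->]].
have E : outer_face b u i.-1 `&` disk (u i) = Sset i.
  apply/seteqP; split => p h.
    exact/(S_env (i:=i) p iN).
  exact/(S_env (i:=i) p iN).
rewrite E; apply: connected_component_id; last exact: S_connected.
by rewrite -E.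
Qed.

Lemma fstc : continuous (fun p : R * R => p.1).
Proof. move=> p; exact: cvg_fst. Qed.
Lemma sndc : continuous (fun p : R * R => p.2).
Proof. move=> p; exact: cvg_snd. Qed.

Lemma open_ltf (f g : R * R -> R) : continuous f -> continuous g ->
  open [set p | f p < g p].
Proof.
move=> fc gc.
have -> : [set p | f p < g p] = (fun p => g p - f p) @^-1` [set t : R | 0 < t].
  by apply/seteqP; split => p /=; rewrite subr_gt0.
apply: open_comp; last exact: open_gt.
by move=> p _; apply: cvgB; [exact: gc|exact: fc].
Qed.

Lemma closure_lef (f g : R * R -> R) (A : set (R * R)) : continuous f -> continuous g ->
  A `<=` [set p | f p <= g p] -> closure A `<=` [set p | f p <= g p].
Proof.
move=> fc gc AC.
have cl : closed [set p | f p <= g p].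
  have -> : [set p | f p <= g p] = ~` [set p | g p < f p].
    by apply/seteqP; split => p /=; rewrite leNgt => /negP.
  exact/open_closedC/open_ltf.
by move=> p /(closureS AC); rewrite -(closure_id _).1.
Qed.

Lemma open_interior (O A : set (R * R)) p : open O -> O `<=` A -> O p -> interior A p.
Proof.
move=> oO OA Op; rewrite /interior.
apply: (filterS OA); exact: open_nbhs_nbhs.
Qed.

Lemma not_interior_up (A : set (R * R)) x y :
  (forall t, 0 < t -> ~ A (x, y + t)) -> ~ interior A (x, y).
Proof.
move=> H intA.
have nb : nbhs y ((fun t => (x, t)) @^-1` A) := @pair_cont_r x y A intA.
move/nbhs_ballP: nb => [e e0 sub].
apply: (H (e / 2)); first by apply: divr_gt0.
apply: (sub (y + e / 2)).
rewrite -ball_normE /ball_ /= opprD addrA subrr sub0r normrN ger0_norm; last by apply: divr_ge0 => //; exact: ltW.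
have e0' : 0 < e := e0; lra.
Qed.

Lemma closure_fst (A : set (R * R)) (X : set R) p :
  closure A p -> A `<=` (fun q => q.1) @^-1` X -> closure X p.1.
Proof.
move=> cA AX B nB.
have nB' : nbhs p ((fun q : R * R => q.1) @^-1` B) := @fstc p B nB.
have [q [Aq Bq]] := cA _ nB'.
by exists q.1; split => //; apply: AX.
Qed.

Lemma envc k : continuous (fun p : R * R => env k p.1).
Proof. move=> p; exact: (continuous_comp (@fstc p) (@env_cont k p.1)). Qed.

Lemma cstc (c : R) : continuous (fun _ : R * R => c).
Proof. move=> p; exact: cvg_cst. Qed.

Lemma S_eq i : (1 <= i <= N)%N -> outer_face b u i.-1 `&` disk (u i) = Sset i.
Proof.
move=> iN; apply/seteqP; split => p h.
  exact/(S_env (i:=i) p iN).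
exact/(S_env (i:=i) p iN).
Qed.

Definition Lay k : set (R * R) :=
  if k == 0%N then [set p | p.2 <= ll]
  else if k == N.+1 then [set p | env N p.1 < p.2] else Sset k.

Lemma regions_lay A : regions b u N A -> exists2 k, (k <= N.+1)%N & A = Lay k.
Proof.
case => [[->|[i [iN lab]]]|->].
- exists N.+1 => //; rewrite /Lay /= eqxx.
  by apply/seteqP; split => p /= h; apply/(outer_env p (leqnn N)).
- exists i; first by case/andP: iN => _ /leqW.
  rewrite /Lay; case/andP: iN => i1 iN'.
  rewrite (negbTE (lt0n_neq0 i1)) (ltn_eqF (leq_ltn_trans iN' (ltnSn N))).
  by apply: labeled_S; rewrite ?i1.
- exists 0%N => //; rewrite /Lay /=.
  by apply/seteqP; split => p /=; rewrite /halfH /ll /= => h; [rewrite leNgt; exact/negP|rewrite leNgt in h; exact/negP].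
Qed.

Lemma Sset_region k : (1 <= k <= N)%N -> Sset k !=set0 -> regions b u N (Sset k).
Proof.
move=> kN [p Sp]; left; right; exists k; split => //.
exists p; rewrite S_eq //; split => //.
by rewrite connected_component_id //; exact: S_connected.
Qed.

Lemma cl_up k : (k <= N)%N -> closure (Lay k) `<=` [set p | p.2 <= env k p.1].
Proof.
move=> kN; apply: closure_lef; [exact: sndc|exact: envc|].
move=> p; rewrite /Lay; case: ifP => [/eqP -> //|k0].
rewrite (ltn_eqF (leq_ltn_trans kN (ltnSn N))).
by case/andP.
Qed.

Lemma cl_lo k : (1 <= k <= N.+1)%N -> closure (Lay k) `<=` [set p | env k.-1 p.1 <= p.2].
Proof.
move=> /andP[k1 kN]; apply: closure_lef; [exact: envc|exact: sndc|].
move=> p; rewrite /Lay (negbTE (lt0n_neq0 k1)); case: ifP => [/eqP -> /= h|_ /andP[h _]].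
  exact: ltW.
exact: ltW.
Qed.

Lemma bd_lay k p : (k <= N.+1)%N -> bd (Lay k) p -> exists2 k', (k' <= N)%N & p.2 = env k' p.1.
Proof.
move=> kN [cl nint].
case: (posnP k) => [k0|k1].
  subst k; exists 0%N => //=; have := cl_up (leq0n N) cl => /= h.
  apply/eqP; rewrite eq_le h /= leNgt; apply/negP => lt; apply: nint.
  apply: (open_interior (O := [set q | q.2 < ll])) => //.
    exact: (@open_ltf (fun q => q.2) (fun _ => ll) sndc (@cstc ll)).
  by move=> q /= /ltW; rewrite /Lay eqxx.
have [kl|kg|ke] := ltngtP k N.+1.
2: by move: kN; rewrite leqNgt kg.
2: { subst k; exists N => //; have := @cl_lo N.+1 (leqnn _) p cl; rewrite /= => h.
  apply/eqP; rewrite eq_le h andbT leNgt; apply/negP => lt; apply: nint.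
  apply: (open_interior (O := Lay N.+1)) => //; last by rewrite /Lay /= eqxx.
  rewrite /Lay /= eqxx; exact: (@open_ltf (fun q => env N q.1) (fun q => q.2) (@envc N) sndc). }
have kN' : (k <= N)%N by rewrite -ltnS.
have hu := cl_up kN' cl; have hl := cl_lo (introT andP (conj k1 kN)) cl.
move: hu hl => /= hu hl.
have [e1|n1] := eqVneq p.2 (env k p.1); first by exists k.
have [e2|n2] := eqVneq p.2 (env k.-1 p.1).
  by exists k.-1 => //; exact: leq_trans (leq_pred k) kN'.
exfalso; apply: nint.
apply: (open_interior (O := [set q | env k.-1 q.1 < q.2] `&` [set q | q.2 < env k q.1])).
- by apply: openI; [exact: (@open_ltf (fun q => env k.-1 q.1) (fun q => q.2) (@envc _) sndc)|exact: (@open_ltf (fun q => q.2) (fun q => env k q.1) sndc (@envc _))].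
- move=> q [h1 h2]; rewrite /Lay (negbTE (lt0n_neq0 k1)) (ltn_eqF kl) /Sset /=.
  by rewrite h1 (ltW h2).
- by split => /=; rewrite lt_neqAle ?hl ?hu ?andbT // eq_sym.
Qed.

Definition XA j : set R := if j == 0%N then setT else Xset j.

Lemma graph_arc k x : exists2 j, (j <= k)%N & XA j x /\ env k x = env j x.
Proof.
elim: k => [|k [j jk [Xj E]]]; first by exists 0%N.
have [lt|ge] := ltP (env k x) (env k.+1 x).
  by exists k.+1 => //; split => //; rewrite /XA /Xset /=.
exists j; first exact: leqW.
split => //; rewrite -E; apply/eqP; rewrite eq_le ge env_mono //.
Qed.

Lemma skel_sub p : skeleton b u N p ->
  exists j, [/\ (j <= N)%N, XA j p.1 & p.2 = env j p.1].
Proof.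
move=> [A reg bdA]; have [k kN AE] := regions_lay reg; subst A.
have [k' k'N E] := bd_lay kN bdA.
have [j jk [Xj E']] := graph_arc k' p.1.
by exists j; split => //; [exact: leq_trans jk k'N| rewrite E E'].
Qed.

Lemma skel_sup j x : (j <= N)%N -> XA j x -> skeleton b u N (x, env j x).
Proof.
move=> jN; rewrite /XA; case: ifP => [/eqP-> _|j0 Xj].
  exists (~` halfH b); first by right.
  split; first by apply: subset_closure; rewrite /halfH /= /ll ltxx.
  apply: not_interior_up => t t0; rewrite /halfH /= /ll; apply; lra.
have j1 : (1 <= j <= N)%N by rewrite lt0n j0.
have Sx : Sset j (x, env j x) by rewrite /Sset /= lexx andbT.
exists (Sset j); first by apply: Sset_region; last by exists (x, env j x).
split; first exact: subset_closure.
apply: not_interior_up => t t0; rewrite /Sset /= => /andP[_]; rewrite leNgt; apply/negP.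
lra.
Qed.

Lemma bnd_cases (X : set R) q : is_interval X -> ~ X q ->
  (forall y, X y -> q < y) \/ (forall y, X y -> y < q).
Proof.
move=> iX nX.
have [h|h] := pselect (forall y, X y -> q < y); first by left.
right => y2 Xy2; rewrite ltNge; apply/negP => qy2.
apply: h => y1 Xy1; rewrite ltNge; apply/negP => y1q.
by apply: nX; apply: (iX y1 y2) => //; rewrite y1q.
Qed.

Lemma left_uniq (X : set R) q q' : closure X q -> closure X q' ->
  (forall y, X y -> q < y) -> (forall y, X y -> q' < y) -> q = q'.
Proof.
have H : forall q q', closure X q -> (forall y, X y -> q' < y) -> ~ q < q'.
  move=> {}q {}q' cq hq' lt.
  have nb : nbhs q [set y | y < q'] by apply: open_nbhs_nbhs; split => //; exact: open_lt.
  have [y [Xy /= yq]] := cq _ nb.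
  by move: (hq' y Xy); rewrite ltNge (ltW yq).
move=> c1 c2 h1 h2; apply/eqP; rewrite eq_le !leNgt; apply/andP; split; apply/negP.
  exact: H c2 h1.
exact: H c1 h2.
Qed.

Lemma right_uniq (X : set R) q q' : closure X q -> closure X q' ->
  (forall y, X y -> y < q) -> (forall y, X y -> y < q') -> q = q'.
Proof.
have H : forall q q', closure X q -> (forall y, X y -> y < q') -> ~ q' < q.
  move=> {}q {}q' cq hq' lt.
  have nb : nbhs q [set y | q' < y] by apply: open_nbhs_nbhs; split => //; exact: open_gt.
  have [y [Xy /= yq]] := cq _ nb.
  by move: (hq' y Xy); rewrite ltNge (ltW yq).
move=> c1 c2 h1 h2; apply/eqP; rewrite eq_le !leNgt; apply/andP; split; apply/negP.
  exact: H c1 h2.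
exact: H c2 h1.
Qed.

Definition lft m := pick 0 (fun q => [/\ closure (Xset m) q, ~ Xset m q & forall y, Xset m y -> q < y]).
Definition rgt m := pick 0 (fun q => [/\ closure (Xset m) q, ~ Xset m q & forall y, Xset m y -> y < q]).
Definition vf k : R * R :=
  let m := k./2 in let q := if odd k then rgt m else lft m in (q, env m q).

Lemma vertex_vf p : vertices b u N p -> exists2 k, (k < (N.+1).*2)%N & p = vf k.
Proof.
move=> [A1 [A2 [A3 [[r1 r2 r3] [[n12 n13 n23] [b1 b2 b3]]]]]].
have [k1 k1N E1] := regions_lay r1; have [k2 k2N E2] := regions_lay r2.
have [k3 k3N E3] := regions_lay r3; subst A1 A2 A3.
have [lo [m [hi [lm mh [loN cllo] [mN clm] [hiN clhi]]]]] :=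
  @mid3 (fun k => (k <= N.+1)%N /\ closure (Lay k) p) k1 k2 k3
   (conj k1N b1.1) (conj k2N b2.1) (conj k3N b3.1)
   (fun e => n12 (congr1 Lay e)) (fun e => n13 (congr1 Lay e)) (fun e => n23 (congr1 Lay e)).
have m1 : (1 <= m)%N by exact: leq_ltn_trans (leq0n lo) lm.
have mN' : (m <= N)%N by rewrite -ltnS (leq_trans mh hiN).
have loN' : (lo <= N)%N by exact: leq_trans (ltnW lm) mN'.
have hi1 : (1 <= hi <= N.+1)%N by rewrite hiN andbT (leq_ltn_trans (leq0n m) mh).
have hu := cl_up loN' cllo; have hl := cl_lo hi1 clhi.
have mm : (1 <= m <= N.+1)%N by rewrite m1 (leq_trans mN') // leqnSn.
have hm1 := cl_lo mm clm; have hm2 := cl_up mN' clm.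
move: hu hl hm1 hm2 => /= hu hl hm1 hm2.
have e1 : env lo p.1 <= env m.-1 p.1 by apply: env_mono; rewrite -ltnS prednK.
have e2 : env m p.1 <= env hi.-1 p.1 by apply: env_mono; rewrite -ltnS prednK // (leq_ltn_trans (leq0n m) mh).
have Em1 : env m.-1 p.1 = p.2 by apply/eqP; rewrite eq_le hm1 (le_trans hu e1).
have Em : env m p.1 = p.2 by apply/eqP; rewrite eq_le hm2 (le_trans e2 hl).
have nX : ~ Xset m p.1 by rewrite /Xset /= Em1 Em ltxx.
have cX : closure (Xset m) p.1.
  apply: (closure_fst clm) => q; rewrite /Lay (negbTE (lt0n_neq0 m1)).
  rewrite (ltn_eqF (leq_ltn_trans mN' (ltnSn N))) /Sset /Xset /= => /andP[h1 h2].
  exact: lt_le_trans h2.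
have mI : (1 <= m <= N)%N by rewrite m1.
have [L|Rt] := bnd_cases (Xs_interval mI) nX.
- exists m.*2; first by move: mN'; lia.
  rewrite /vf odd_double doubleK /=.
  have P := @pickP _ 0 (fun q => [/\ closure (Xset m) q, ~ Xset m q & forall y, Xset m y -> q < y]) (ex_intro _ p.1 (And3 cX nX L)).
  case: P => c1 _ c3; rewrite -/(lft m).
  have -> : lft m = p.1 by apply: (left_uniq c1 cX c3 L).
  by rewrite Em; case: p {hu hl hm1 hm2 e1 e2 Em1 Em nX cX L c1 c3 b1 b2 b3 clm cllo clhi}.
- exists m.*2.+1; first by move: mN'; lia.
  have hh : (m.*2.+1)./2 = m by rewrite -[m.*2.+1]/(true + m.*2)%N half_bit_double.
  rewrite /vf hh /= odd_double /=.
  have P := @pickP _ 0 (fun q => [/\ closure (Xset m) q, ~ Xset m q & forall y, Xset m y -> y < q]) (ex_intro _ p.1 (And3 cX nX Rt)).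
  case: P => c1 _ c3; rewrite -/(rgt m).
  have -> : rgt m = p.1 by apply: (right_uniq c1 cX c3 Rt).
  by rewrite Em; case: p {hu hl hm1 hm2 e1 e2 Em1 Em nX cX Rt c1 c3 b1 b2 b3 clm cllo clhi}.
Qed.

Definition Yset := skeleton b u N `\` vertices b u N.
Definition cutm j m := XA j (vf m).1 /\ vf m = ((vf m).1, env j (vf m).1).
Definition cut j c := exists m, [/\ (m < (N.+1).*2)%N, cutm j m & (vf m).1 = c].
Definition lower (oc : option R) (y : R) := if oc is Some c then c < y else true.
Definition Prp (E : set (R * R)) j oc := exists x, [/\ XA j x, lower oc x,
  (forall y, lower oc y -> y < x -> ~ cut j y) & E (x, env j x)].

Lemma XA_interval j : (j <= N)%N -> is_interval (XA j).
Proof.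
rewrite /XA; case: ifP => [_ _ //|j0 jN].
by apply: Xs_interval; rewrite lt0n j0.
Qed.

Lemma arc_disj j j' x : XA j x -> XA j' x -> env j x = env j' x -> j = j'.
Proof.
have H : forall j j', (j < j')%N -> XA j' x -> env j x <> env j' x.
  move=> {}j {}j' jj; rewrite /XA (gtn_eqF (leq_ltn_trans (leq0n j) jj)) /Xset /= => X E.
  have : env j x <= env j'.-1 x by apply: env_mono; rewrite -ltnS prednK // (leq_ltn_trans (leq0n j) jj).
  by rewrite E leNgt X.
move=> X1 X2 E; have [jj|jj|//] := ltngtP j j'.
  by exfalso; exact: H jj X2 E.
by exfalso; exact: H jj X1 (esym E).
Qed.

Lemma graph_seg_connected j x1 x2 : connected ((fun x => (x, env j x)) @` `[x1, x2]).
Proof.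
apply: connected_continuous_connected; first exact: segment_connected.
exact/continuous_subspaceT/pair_cont_l/env_cont.
Qed.

Lemma same_comp j oc x1 x2 : (j <= N)%N -> x1 <= x2 -> XA j x1 -> XA j x2 -> lower oc x1 ->
  (forall y, lower oc y -> y < x2 -> ~ cut j y) ->
  Yset (x1, env j x1) -> Yset (x2, env j x2) ->
  connected_component Yset (x1, env j x1) (x2, env j x2).
Proof.
move=> jN x12 X1 X2 l1 nc Y1 Y2.
apply: (connected_component_max (B := (fun x => (x, env j x)) @` `[x1, x2])).
- by exists x1 => //; rewrite set_itvcc /= lexx x12.
- move=> q [x]; rewrite set_itvcc /= => /andP[h1 h2] <-.
  have [e1|n1] := eqVneq x x1; first by subst.
  have [e2|n2] := eqVneq x x2; first by subst.
  have lt1 : x1 < x by rewrite lt_neqAle eq_sym n1 h1.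
  have lt2 : x < x2 by rewrite lt_neqAle n2 h2.
  have Xx : XA j x by apply: (XA_interval jN X1 X2); rewrite h1 h2.
  split; first exact: skel_sup.
  move=> /vertex_vf [k kN E].
  have lx : lower oc x by case: oc l1 nc => //= c cl _; exact: lt_trans lt1.
  apply: (nc x lx lt2); exists k; split => //; last by rewrite -E.
  by split; rewrite -E.
- exact: graph_seg_connected.
- by exists x2 => //; rewrite set_itvcc /= lexx x12.
Qed.

Lemma edge_eq E z : edges b u N E -> E z -> E = connected_component Yset z.
Proof. by move=> [w [Yw ->]] Ez; apply: same_connected_component. Qed.

Lemma edge_Y E z : edges b u N E -> E z -> Yset z.
Proof. by move=> [w [Yw ->]]; apply: connected_component_sub. Qed.

Lemma uniq_edge j oc E1 E2 : (j <= N)%N -> edges b u N E1 -> edges b u N E2 ->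
  Prp E1 j oc -> Prp E2 j oc -> E1 = E2.
Proof.
move=> jN e1 e2 [x1 [X1 l1 c1 E1x]] [x2 [X2 l2 c2 E2x]].
rewrite (edge_eq e1 E1x) (edge_eq e2 E2x).
have Y1 := edge_Y e1 E1x; have Y2 := edge_Y e2 E2x.
have [x12|x21] := leP x1 x2.
  by apply: same_connected_component; exact: (same_comp jN x12 X1 X2 l1 c2 Y1 Y2).
apply/esym/same_connected_component; exact: (same_comp jN (ltW x21) X2 X1 l2 c1 Y2 Y1).
Qed.

Lemma fin_max n (P : nat -> Prop) (v : nat -> R) : (exists m, (m < n)%N /\ P m) ->
  exists m, [/\ (m < n)%N, P m & forall m', (m' < n)%N -> P m' -> v m' <= v m].
Proof.
elim: n => [[m [//]]|n IH [m0 [m0n Pm0]]].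
have [[m1 [m1n Pm1]]|none] := pselect (exists m, (m < n)%N /\ P m).
  have [m [mn Pm mx]] := IH (ex_intro _ m1 (conj m1n Pm1)).
  have [Pn|nPn] := pselect (P n).
    have [le|lt] := leP (v n) (v m).
      exists m; split => //; first exact: ltnW.
      move=> m'; rewrite ltnS leq_eqVlt => /orP[/eqP->//|]; exact: mx.
    exists n; split => // m'; rewrite ltnS leq_eqVlt => /orP[/eqP->//|m'n Pm'].
    exact: le_trans (mx m' m'n Pm') (ltW lt).
  exists m; split => //; first exact: ltnW.
  move=> m'; rewrite ltnS leq_eqVlt => /orP[/eqP->//|]; exact: mx.
have Pn : P n.
  move: m0n; rewrite ltnS leq_eqVlt => /orP[/eqP<-//|m0n].
  by exfalso; apply: none; exists m0.
exists n; split => // m'; rewrite ltnS leq_eqVlt => /orP[/eqP->//|m'n Pm'].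
by exfalso; apply: none; exists m'.
Qed.

Definition ef k : set (R * R) :=
  if (k <= N)%N then pick set0 (fun E => edges b u N E /\ Prp E k None)
  else pick set0 (fun E => edges b u N E /\ exists j, [/\ (j <= N)%N, cutm j (k - N.+1)%N &
           Prp E j (Some (vf (k - N.+1)%N).1)]).

Lemma edges_ef E : edges b u N E -> exists2 k, (k < N.+1 + (N.+1).*2)%N & E = ef k.
Proof.
move=> eE; have [z [Yz Ez]] := eE.
have Ezz : E z by rewrite Ez; exact: connected_component_refl.
have [j [jN Xj zj]] := skel_sub Yz.1.
have zE : z = (z.1, env j z.1) by rewrite -zj; case: z {Ez Yz Ezz zj Xj}.
set x := z.1 in Xj zE.
have Ex : E (x, env j x) by rewrite -zE.
have [some|none] := pselect (exists m, (m < (N.+1).*2)%N /\ (cutm j m /\ (vf m).1 < x)).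
  have [m [mN [cm mx] mmax]] := fin_max (fun m => (vf m).1) some.
  have PE : Prp E j (Some (vf m).1).
    exists x; split => //.
    move=> y /= cy yx [m' [m'N cm' ey]].
    have := mmax m' m'N (conj cm' (ltac:(by rewrite ey) : (vf m').1 < x)).
    by rewrite ey leNgt cy.
  exists (N.+1 + m)%N; first by rewrite ltn_add2l.
  rewrite /ef; case: ifP => [h|_]; first by exfalso; move: h; lia.
  have -> : (N.+1 + m - N.+1)%N = m by lia.
  have := @pickP _ set0 (fun E => edges b u N E /\ exists j, [/\ (j <= N)%N, cutm j m &
           Prp E j (Some (vf m).1)]) (ex_intro _ E (conj eE (ex_intro _ j (And3 jN cm PE)))).
  move=> [eE' [j' [j'N cm' PE']]].
  have jj : j' = j.
    apply: (arc_disj cm'.1 cm.1).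
    by have := cm'.2; rewrite {1}cm.2 => -[].
  subst j'; exact/esym/(uniq_edge jN eE' eE PE' PE).
exists j; first by move: jN; lia.
rewrite /ef jN.
have PE : Prp E j None.
  exists x; split => // y _ yx [m' [m'N cm' ey]].
  by apply: none; exists m'; split => //; split => //; rewrite ey.
have := @pickP _ set0 (fun E => edges b u N E /\ Prp E j None) (ex_intro _ E (conj eE PE)).
move=> [eE' PE']; exact/esym/(uniq_edge jN eE' eE PE' PE).
Qed.

Lemma part1 : complexity_le b u N (6 * N.+1).
Proof.
exists N.+1, (N.+1).*2, (N.+1 + (N.+1).*2)%N; split; first lia.
split; [|split].
- exists (fun k => if k == 0%N then outer_face b u N else Sset k).
  move=> C [->|[i [iN lab]]]; first by exists 0%N.
  exists i; first by move: iN => /andP[_]; rewrite /= ltnS.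
  rewrite (labeled_S iN lab); case: i iN {lab} => //.
- exists vf => p /vertex_vf [k kN ->]; by exists k.
- exists ef => E /edges_ef [k kN ->]; by exists k.
Qed.

Lemma part2 i C1 C2 : (1 <= i <= N)%N -> labeled_face b u i C1 -> labeled_face b u i C2 -> C1 = C2.
Proof. by move=> iN l1 l2; rewrite (labeled_S iN l1) (labeled_S iN l2). Qed.

End Env.

Theorem corollary1 (R : realType) :
  (exists K : nat, forall (a b : R) (N : nat) (u : nat -> R * R),
     (forall i, (1 <= i <= N)%N -> box a b (u i)) ->
     complexity_le b u N (K * N.+1)) /\
  (forall (a b : R) (N : nat) (u : nat -> R * R),
     (forall i, (1 <= i <= N)%N -> box a b (u i)) ->
     forall i, (1 <= i <= N)%N ->
     forall C1 C2, labeled_face b u i C1 -> labeled_face b u i C2 -> C1 = C2).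
Proof.
split.
  by exists 6%N => a b N u hbox; exact: (part1 hbox).
by move=> a b N u hbox i iN C1 C2 l1 l2; exact: (part2 hbox iN l1 l2).
Qed.
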